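(* Let $p$ be a prime, $q$ a power of $p$, $n\ge1$ odd, $m=\frac{q^n+1}{q+1}$. For $g\in B(Q_\infty)$ let $N(g)$ be the number of places $Q_{\alpha\beta}$ of $\mathcal C_n$ with $g(Q_{\alpha\beta})=Q_{\alpha\beta}$. Then $N(g)$ equals the number of places $P_{\alpha\beta}$ of $\mathbb{F}_{q^{2n}}(x,y)$ with $\pi(g)(P_{\alpha\beta})=P_{\alpha\beta}$.
   Context: Let $\mathcal C_n=\mathbb{F}_{q^{2n}}(x,y,z)$ be the function field defined by $x^q+x=y^{q+1}$ and $z^m=y^{q^2}-y$. Let $B(Q_\infty)$ be the group of automorphisms $[a,b,c,d]$ of $\mathcal C_n$ given by $x\mapsto a^{q+1}x+ab^qy+c$, $y\mapsto ay+b$, $z\mapsto dz$, where $a\in\mathbb{F}_{q^2}^*$, $b,c\in\mathbb{F}_{q^2}$, $c^q+c=b^{q+1}$, $d\in\mathbb{F}_{q^{2n}}$, $d^m=a$. Let $\pi(g)$ denote the restriction of $g=[a,b,c,d]$ to the subfield $\mathbb{F}_{q^{2n}}(x,y)$ (given by $x\mapsto a^{q+1}x+ab^qy+c$, $y\mapsto ay+b$). For $\alpha,\beta\in\mathbb{F}_{q^2}$ with $\alpha^q+\alpha=\beta^{q+1}$, let $P_{\alpha\beta}$ be the place of $\mathbb{F}_{q^{2n}}(x,y)$ that is the common zero of $x-\alpha$ and $y-\beta$; it is totally ramified in $\mathcal C_n/\mathbb{F}_{q^{2n}}(x,y)$, and $Q_{\alpha\beta}$ denotes the unique place of $\mathcal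 C_n$ above it. *)

(* Defs.v *)
From HB Require Import structures.
From mathcomp Require Import all_boot all_order all_algebra.
From mathcomp Require Import boolp classical_sets.
Set Implicit Arguments. Unset Strict Implicit. Unset Printing Implicit Defensive.
Import GRing.Theory.
Local Open Scope ring_scope.
Local Open Scope classical_set_scope.

Section FunctionFields.
Variables (K : finFieldType) (F : fieldType) (iota : {rmorphism K -> F}).

Definition subfield_over (S : set F) : Prop :=
  [/\ forall k : K, S (iota k),
      forall u v, S u -> S v -> S (u - v),
      forall u v, S u -> S v -> S (u * v)
    & forall u, S u -> S u^-1].

Definition gen_subfield (ts : seq F) : set F :=
  [set f | forall S : set F, subfield_over S -> (forall t, t \in ts -> S t) -> S f].

Definition valuation_ring (E O : set F) : Prop :=
  [/\ O `<=` E, (forall k : K, O (iota k)),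
      (forall u v, O u -> O v -> O (u - v) /\ O (u * v)),
      (exists f, E f /\ ~ O f)
    & forall f, E f -> f <> 0 -> O f \/ O f^-1].

Definition is_place (E P : set F) : Prop :=
  exists O, valuation_ring E O /\ P = [set f | O f /\ (f = 0 \/ ~ O f^-1)].

Definition is_P_ab (x y : F) (alpha beta : K) (P : set F) : Prop :=
  is_place (gen_subfield [:: x; y]) P /\
  P (x - iota alpha) /\ P (y - iota beta).

(* Q is a place of F (= K(x,y,z)) lying above P_{alpha beta}. *)
Definition is_Q_ab (x y : F) (alpha beta : K) (Q : set F) : Prop :=
  is_place setT Q /\ is_P_ab x y alpha beta (Q `&` gen_subfield [:: x; y]).

End FunctionFields.

(* Main.v *)
Require Import Defs.
From HB Require Import structures.
From mathcomp Require Import all_boot all_order all_algebra.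
From mathcomp Require Import boolp classical_sets.
From mathcomp Require Import ring.
From mathcomp Require Import finfield.
Import GRing.Theory.
Local Open Scope ring_scope.
Set Implicit Arguments. Unset Strict Implicit. Unset Printing Implicit Defensive.
Section VR.
Variables (K : finFieldType) (F : fieldType) (iota : {rmorphism K -> F}).

Definition subring_over (S : set F) : Prop :=
  [/\ forall k : K, S (iota k), forall u v, S u -> S v -> S (u - v)
    & forall u v, S u -> S v -> S (u * v)].

Section SR.
Variables (S : set F) (hS : subring_over S).
Lemma sr_c k : S (iota k). Proof. by case: hS. Qed.
Lemma sr_B u v : S u -> S v -> S (u - v). Proof. by case: hS => _ h _; apply: h. Qed.
Lemma sr_M u v : S u -> S v -> S (u * v). Proof. by case: hS => _ _ h; apply: h. Qed.
Lemma sr0 : S 0. Proof. by rewrite -(rmorph0 iota); apply: sr_c. Qed.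
Lemma sr1 : S 1. Proof. by rewrite -(rmorph1 iota); apply: sr_c. Qed.
Lemma sr_N u : S u -> S (- u). Proof. by move=> h; rewrite -sub0r; apply: sr_B => //; apply: sr0. Qed.
Lemma sr_D u v : S u -> S v -> S (u + v).
Proof. by move=> hu hv; rewrite -[v]opprK; apply: sr_B => //; apply: sr_N. Qed.
Lemma sr_X u i : S u -> S (u ^+ i).
Proof. by move=> hu; elim: i => [|i IH]; [rewrite expr0; apply: sr1 | rewrite exprS; apply: sr_M]. Qed.
Lemma sr_sum (I : Type) (r : seq I) (P : pred I) (f : I -> F) :
  (forall i, P i -> S (f i)) -> S (\sum_(i <- r | P i) f i).
Proof. move=> h; apply: (big_ind S) => //; [exact: sr0 | exact: sr_D]. Qed.
Lemma sr_horner (p : {poly F}) u : (forall i, S p`_i) -> S u -> S p.[u].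
Proof.
move=> hp hu; rewrite horner_coef; apply: sr_sum => i _.
by apply: sr_M => //; apply: sr_X.
Qed.
End SR.

Lemma sf_sr E : subfield_over iota E -> subring_over E.
Proof. by case=> *; split. Qed.
Lemma sf_V E u : subfield_over iota E -> E u -> E u^-1.
Proof. by case=> _ _ _ h; apply: h. Qed.
Lemma sfT : subfield_over iota setT.
Proof. by split. Qed.

Lemma gen_sf ts : subfield_over iota (gen_subfield iota ts).
Proof.
split.
- by move=> k S [hS _ _ _] _; apply: hS.
- by move=> u v hu hv S hS hts; case: (hS) => _ h _ _; apply: h; [apply: hu|apply: hv].
- by move=> u v hu hv S hS hts; case: (hS) => _ _ h _; apply: h; [apply: hu|apply: hv].
- by move=> u hu S hS hts; case: (hS) => _ _ _ h; apply: h; apply: hu.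
Qed.
Lemma gen_in ts t : t \in ts -> gen_subfield iota ts t.
Proof. by move=> ht S _ h; apply: h. Qed.
Lemma gen_min ts S : subfield_over iota S -> (forall t, t \in ts -> S t) ->
  forall f, gen_subfield iota ts f -> S f.
Proof. by move=> hS hts f hf; apply: hf. Qed.

Definition mx (O : set F) : set F := [set f | O f /\ (f = 0 \/ ~ O f^-1)]%classic.

Section VRl.
Variables (E O : set F) (hE : subfield_over iota E) (hO : valuation_ring iota E O).
Lemma vr_sr : subring_over O.
Proof. case: hO => _ hc hm _ _; split => // u v hu hv; by have [] := hm u v hu hv. Qed.
Lemma vr_E u : O u -> E u. Proof. by case: hO => h _ _ _ _; apply: h. Qed.
Lemma vr_or u : E u -> u <> 0 -> O u \/ O u^-1. Proof. by case: hO => _ _ _ _ h; apply: h. Qed.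
Lemma mx_O u : mx O u -> O u. Proof. by case. Qed.
Lemma mx0 : mx O 0. Proof. by split; [apply: sr0 vr_sr | left]. Qed.
Lemma mx1 : ~ mx O 1.
Proof. by case=> _ [/eqP|]; [rewrite oner_eq0 | rewrite invr1; apply; apply: sr1 vr_sr]. Qed.
Lemma mx_ninv u : mx O u -> u <> 0 -> ~ O u^-1. Proof. by case=> _ [->|]. Qed.
Lemma mxM r a : O r -> mx O a -> mx O (r * a).
Proof.
move=> hr [ha hai]; split; first exact: sr_M vr_sr _ _ hr ha.
have [->|nz] := eqVneq (r * a) 0; [by left | right => hinv].
move: nz; rewrite mulf_eq0 negb_or => /andP[/eqP rnz /eqP anz].
case: hai => // hai; apply: hai.
have -> : a^-1 = r * (r * a)^-1 by rewrite invfM mulrA mulfV ?mul1r //; apply/eqP.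
exact: sr_M vr_sr _ _ hr hinv.
Qed.
Lemma mxD a b : mx O a -> mx O b -> mx O (a + b).
Proof.
move=> ma mb; split; first exact: sr_D vr_sr _ _ (mx_O ma) (mx_O mb).
have [->|nz] := eqVneq (a + b) 0; [by left | right => hinv].
have [a0|anz] := eqVneq a 0; first by move: hinv; rewrite a0 add0r; apply: (mx_ninv mb) => b0; move: nz; rewrite a0 b0 addr0 eqxx.
have [b0|bnz] := eqVneq b 0; first by move: hinv; rewrite b0 addr0; apply: (mx_ninv ma) => a0; move: anz; rewrite a0 eqxx.
have Ea := vr_E (mx_O ma); have Eb := vr_E (mx_O mb).
have Eab : E (a / b) by apply: (sr_M (sf_sr hE)) => //; apply: sf_V.
have abnz : a / b <> 0 by apply/eqP; rewrite mulf_eq0 invr_eq0 negb_or anz bnz.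
case: (vr_or Eab abnz) => h.
- apply: (mx_ninv mb); first exact/eqP.
  have -> : b^-1 = (a + b)^-1 * (a / b + 1).
    by field; rewrite ?anz ?bnz ?nz.
  apply: (sr_M vr_sr) => //; apply: (sr_D vr_sr) => //; apply: sr1 vr_sr.
- apply: (mx_ninv ma); first exact/eqP.
  have -> : a^-1 = (a + b)^-1 * ((a / b)^-1 + 1).
    by field; rewrite ?anz ?bnz ?nz.
  apply: (sr_M vr_sr) => //; apply: (sr_D vr_sr) => //; apply: sr1 vr_sr.
Qed.
Lemma mxN a : mx O a -> mx O (- a).
Proof. by move=> h; rewrite -mulN1r; apply: mxM => //; apply: sr_N vr_sr _ (sr1 vr_sr). Qed.
Lemma mxB a b : mx O a -> mx O b -> mx O (a - b).
Proof. by move=> ha hb; apply: mxD => //; apply: mxN. Qed.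
Lemma unitP u : O u -> ~ mx O u -> u <> 0 /\ O u^-1.
Proof.
move=> hu hn; have nz : u <> 0 by move=> u0; apply: hn; rewrite u0; apply: mx0.
split => //; case: (pselect (O u^-1)) => // h; exfalso; apply: hn; split => //; by right.
Qed.
Lemma unitD u j : O u -> ~ mx O u -> mx O j -> ~ mx O (u + j).
Proof. by move=> hu hn hj hs; apply: hn; rewrite -(addrK j u); apply: mxB. Qed.
Lemma unit_nmx u : u <> 0 -> O u^-1 -> ~ mx O u.
Proof. by move=> nz hi hm; apply: (mx_ninv hm). Qed.
Lemma const_nmx c : c != 0 -> ~ mx O (iota c).
Proof.
move=> cnz; apply: unit_nmx; first by apply/eqP; rewrite fmorph_eq0.
by rewrite -fmorphV; apply: (sr_c vr_sr).
Qed.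
Lemma nmx_const c : mx O (iota c) -> c = 0.
Proof. by move=> h; apply/eqP; apply: contraLR isT => /const_nmx. Qed.
Lemma unitM u v : O u -> ~ mx O u -> O v -> ~ mx O v -> ~ mx O (u * v).
Proof.
move=> hu nu hv nv h; have [unz ui] := unitP hu nu; apply: nv.
have -> : v = u^-1 * (u * v) by rewrite mulrA mulVf ?mul1r //; apply/eqP.
exact: mxM ui h.
Qed.
Lemma unitV u : O u -> ~ mx O u -> O u^-1 /\ ~ mx O u^-1.
Proof.
move=> hu nu; have [unz ui] := unitP hu nu; split => //; apply: unit_nmx; last by rewrite invrK.
by rewrite -[_ = _]/(_ = _); apply/eqP; rewrite invr_eq0; apply/eqP.
Qed.
End VRl.
End VR.
Section Chev.
Variables (K : finFieldType) (F : fieldType) (iota : {rmorphism K -> F}).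
Variables (B0 I0 : set F).

Definition good (B I : set F) : Prop :=
  [/\ subring_over iota B, (I `<=` B)%classic, I 0,
      (forall u v, I u -> I v -> I (u - v)) &
      (forall r u, B r -> I u -> I (r * u))] /\
      (~ I 1 /\ ((B0 `<=` B)%classic /\ (I0 `<=` I)%classic)).

Lemma expfBle (x : F) m n : x != 0 -> (n <= m)%N -> x ^+ m * x^-1 ^+ n = x ^+ (m - n).
Proof. by move=> nz le; rewrite exprVn expfB_cond ?(negPf nz). Qed.

Section Max.
Variables (B M : set F) (gBM : good B M).
Hypothesis maxBM : forall B' I', good B' I' -> (B `<=` B')%classic -> (M `<=` I')%classic ->
   (B' `<=` B)%classic /\ (I' `<=` M)%classic.

Let srB : subring_over iota B. Proof. by case: gBM => -[]. Qed.
Let MB u : M u -> B u. Proof. by case: gBM => -[_ h _ _ _] _; apply: h. Qed.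
Let M0 : M 0. Proof. by case: gBM => -[]. Qed.
Let MB2 u v : M u -> M v -> M (u - v). Proof. by case: gBM => -[_ _ _ h _] _; apply: h. Qed.
Let MM r u : B r -> M u -> M (r * u). Proof. by case: gBM => -[_ _ _ _ h] _; apply: h. Qed.
Let M1 : ~ M 1. Proof. by case: gBM => _ []. Qed.
Let MN u : M u -> M (- u). Proof. by move=> h; rewrite -sub0r; apply: MB2. Qed.
Let MD u v : M u -> M v -> M (u + v). Proof. by move=> hu hv; rewrite -[v]opprK; apply: MB2 => //; apply: MN. Qed.
Let Msum (I : Type) (r : seq I) (P : pred I) (f : I -> F) :
  (forall i, P i -> M (f i)) -> M (\sum_(i <- r | P i) f i).
Proof. by move=> h; apply: (big_ind M) => //. Qed.

Lemma max_M1 b : B b -> ~ M b -> exists m r, [/\ M m, B r & 1 = m + b * r].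
Proof.
move=> Bb nMb; case: (pselect (exists m r, [/\ M m, B r & 1 = m + b * r])) => // hn.
pose I' := [set w | exists m r, [/\ M m, B r & w = m + b * r]]%classic.
have gI : good B I'.
  split; [split; first exact: srB | split].
  - move=> w [m [r [hm hr ->]]]; apply: (sr_D srB); [exact: MB | exact: (sr_M srB)].
  - by exists 0, 0; split => //; [exact: (sr0 srB) | rewrite mulr0 addr0].
  - move=> u v [m [r [hm hr ->]]] [m' [r' [hm' hr' ->]]].
    exists (m - m'), (r - r'); split; [exact: MB2 | exact: (sr_B srB) | ring].
  - move=> s u Bs [m [r [hm hr ->]]]; exists (s * m), (s * r); split; [exact: MM | exact: (sr_M srB) | ring].
  - by move=> [m [r [hm hr e]]]; apply: hn; exists m, r.
  - case: gBM => _ [_ [h1 h2]]; split => // u /h2 hu; exists u, 0; split => //; first exact: (sr0 srB).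
    by rewrite mulr0 addr0.
have hsub : (M `<=` I')%classic.
  by move=> u hu; exists u, 0; split => //; [exact: (sr0 srB) | rewrite mulr0 addr0].
have [_ h] := maxBM gI (fun u h => h) hsub.
exfalso; apply: nMb; apply: h; exists 0, 1; split => //; first exact: (sr1 srB).
by rewrite mulr1 add0r.
Qed.

Lemma max_M2 u v : B u -> B v -> ~ M u -> ~ M v -> ~ M (u * v).
Proof.
move=> Bu Bv nu nv huv.
have [m1 [r1 [hm1 hr1 e1]]] := max_M1 Bu nu.
have [m2 [r2 [hm2 hr2 e2]]] := max_M1 Bv nv.
apply: M1.
have -> : 1 = m1 * m2 + m1 * (v * r2) + u * r1 * m2 + r1 * r2 * (u * v).
  by rewrite -[1]mulr1 {1}e1 e2; ring.
apply: MD; [apply: MD; [apply: MD|]|].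
- by apply: MM => //; apply: MB.
- by rewrite mulrC; apply: MM => //; apply: (sr_M srB).
- by apply: MM => //; apply: (sr_M srB).
- by apply: MM => //; apply: (sr_M srB).
Qed.

Lemma max_MX b i : B b -> ~ M b -> ~ M (b ^+ i).
Proof.
move=> Bb nb; elim: i => [|i IH]; first by rewrite expr0.
by rewrite exprS; apply: max_M2 => //; apply: (sr_X srB).
Qed.

Definition Bx f := [set w | exists p : {poly F}, (forall i, B p`_i) /\ w = p.[f]]%classic.
Definition Mx f := [set w | exists p : {poly F}, (forall i, M p`_i) /\ w = p.[f]]%classic.

Lemma max_ext f : ~ Mx f 1 -> B f.
Proof.
move=> nM.
have BC c : B c -> forall i, B (c%:P)`_i.
  by move=> Bc i; rewrite coefC; case: ifP => // _; apply: (sr0 srB).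
have MC c : M c -> forall i, M (c%:P)`_i.
  by move=> Mc i; rewrite coefC; case: ifP.
have g : good (Bx f) (Mx f).
  split; [split | split; first exact: nM].
  - split.
    + by move=> k; exists (iota k)%:P; split; [apply: BC; apply: (sr_c srB) | rewrite hornerC].
    + move=> u v [p [hp ->]] [p' [hp' ->]]; exists (p - p'); split; last by rewrite hornerD hornerN.
      by move=> i; rewrite coefB; apply: (sr_B srB).
    + move=> u v [p [hp ->]] [p' [hp' ->]]; exists (p * p'); split; last by rewrite hornerM.
      by move=> i; rewrite coefM; apply: (sr_sum srB) => j _; apply: (sr_M srB).
  - by move=> w [p [hp ->]]; exists p; split => // i; apply: MB.
  - by exists 0; split; [move=> i; rewrite coef0 | rewrite horner0].
  - move=> u v [p [hp ->]] [p' [hp' ->]]; exists (p - p'); split; last by rewrite hornerD hornerN.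
    by move=> i; rewrite coefB; apply: MB2.
  - move=> r u [p [hp ->]] [p' [hp' ->]]; exists (p * p'); split; last by rewrite hornerM.
    by move=> i; rewrite coefM; apply: Msum => j _; apply: MM.
  - case: gBM => _ [_ [h1 h2]]; split.
    + by move=> u /h1 hu; exists u%:P; split; [apply: BC | rewrite hornerC].
    + by move=> u /h2 hu; exists u%:P; split; [apply: MC | rewrite hornerC].
have [h _] := maxBM g (fun u hu => ex_intro _ u%:P (conj (BC u hu) (esym (hornerC u f))))
                  (fun u hu => ex_intro _ u%:P (conj (MC u hu) (esym (hornerC u f)))).
apply: h; exists 'X; split; last by rewrite hornerX.
by move=> i; rewrite coefX; case: (i == 1%N); [apply: (sr1 srB) | apply: (sr0 srB)].
Qed.

Lemma max_inv b : B b -> ~ M b -> B b^-1.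
Proof.
move=> Bb nb; apply: max_ext => -[p [hp e]].
have bnz : b != 0 by apply/eqP => b0; apply: nb; rewrite b0.
apply: (@max_MX b (size p) Bb nb).
have -> : b ^+ size p = \sum_(i < size p) p`_i * b ^+ (size p - i).
  rewrite -[LHS]mulr1 e horner_coef mulr_sumr; apply: eq_bigr => i _.
  by rewrite mulrCA expfBle // ltnW.
by apply: Msum => i _; rewrite mulrC; apply: MM => //; apply: (sr_X srB).
Qed.

Lemma max_red (g : F) (p r : {poly F}) : g != 0 -> (forall i, M p`_i) -> (forall i, M r`_i) ->
  p.[g] = 1 -> r.[g^-1] = 1 -> (size r <= size p)%N ->
  exists p' : {poly F}, [/\ forall i, M p'`_i, (size p' < size p)%N & p'.[g] = 1].
Proof.
move=> gnz hp hr pg rg srp.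
have pnz : p != 0 by apply/eqP => p0; move: pg; rewrite p0 horner0 => /eqP; rewrite eq_sym oner_eq0.
have rnz : r != 0 by apply/eqP => r0; move: rg; rewrite r0 horner0 => /eqP; rewrite eq_sym oner_eq0.
set n := (size p).-1; set k := (size r).-1.
have hsp : size p = n.+1 by rewrite /n prednK // size_poly_gt0.
have hsr : size r = k.+1 by rewrite /k prednK // size_poly_gt0.
have kn : (k <= n)%N by rewrite -ltnS -hsr -hsp.
have Br0 : B (1 - r`_0) by apply: (sr_B srB); [apply: (sr1 srB) | apply: MB].
have nM : ~ M (1 - r`_0) by move=> h; apply: M1; rewrite -(subrK (r`_0) 1); apply: MD.
set u := (1 - r`_0)^-1.
have Bu : B u := max_inv Br0 nM.
have unz : 1 - r`_0 != 0 by apply/eqP => h; apply: nM; rewrite h.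
pose t := \poly_(i < k) r`_(k - i).
have ht : g ^+ k * (1 - r`_0) = t.[g].
  have e : g ^+ k * r.[g^-1] = g ^+ k by rewrite rg mulr1.
  rewrite horner_coef hsr big_ord_recl /= expr0 mulr1 mulrDr in e.
  rewrite mulrBr mulr1 -{1}e addrAC subrr add0r horner_poly.
  rewrite mulr_sumr (reindex_inj rev_ord_inj) /=; apply: eq_bigr => i _.
  by rewrite /bump /= add1n subnSK ?ltn_ord // mulrCA expfBle ?leq_subr // subKn // (ltnW (ltn_ord i)).
pose p' := \poly_(i < n) p`_i + (p`_n * u)%:P * ('X^(n - k) * t).
exists p'; split.
- move=> i; rewrite coefD coef_poly coefCM coefXnM.
  apply: MD; first by case: ifP.
  apply: MM; first by apply: (sr_M srB) => //; apply: MB.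
  case: ifP => _ //; rewrite coef_poly; by case: ifP.
- rewrite hsp ltnS; apply: leq_trans (size_polyD _ _) _; rewrite geq_max size_poly /=.
  rewrite mul_polyC; apply: leq_trans (size_scale_leq _ _) _.
  apply: leq_trans (size_mul_leq _ _) _; rewrite size_polyXn addSn /=.
  apply: leq_trans (leq_add (leqnn _) (size_poly _ _)) _; by rewrite subnK.
- rewrite hornerD hornerM hornerC hornerM hornerXn -ht horner_poly.
  rewrite -[X in _ = X]pg horner_coef hsp big_ord_recr /=; congr (_ + _).
  have -> : g ^+ (n - k) * (g ^+ k * (1 - r`_0)) = g ^+ n * (1 - r`_0) by rewrite mulrA -exprD subnK.
  by rewrite /u; field; rewrite unz.
Qed.

Lemma max_noboth N (g : F) (p r : {poly F}) : g != 0 -> (size p + size r <= N)%N ->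
  (forall i, M p`_i) -> (forall i, M r`_i) -> p.[g] = 1 -> r.[g^-1] = 1 -> False.
Proof.
elim: N g p r => [|N IH] g p r gnz hs hp hr pg rg.
  move: hs; rewrite leqn0 addn_eq0 size_poly_eq0 => /andP[/eqP p0 _].
  by move: pg; rewrite p0 horner0 => /eqP; rewrite eq_sym oner_eq0.
case: (leqP (size r) (size p)) => hrp.
  have [p' [hp' sp' pg']] := max_red gnz hp hr pg rg hrp.
  by apply: (IH g p' r) => //; rewrite -ltnS; apply: leq_trans hs; rewrite ltn_add2r.
have gi : g^-1 != 0 by rewrite invr_eq0.
have pg2 : p.[g^-1^-1] = 1 by rewrite invrK.
have [r' [hr' sr' rg']] := max_red gi hr hp rg pg2 (ltnW hrp).
apply: (IH g^-1 r' p) => //; rewrite -ltnS; apply: leq_trans hs.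
by rewrite addnC ltn_add2l.
Qed.

Lemma max_final f : f != 0 -> B f \/ B f^-1.
Proof.
move=> fnz; case: (pselect (B f)) => hf; [by left | right].
case: (pselect (B f^-1)) => // hfi; exfalso.
have : Mx f 1 by case: (pselect (Mx f 1)) => // h; exfalso; apply: hf; apply: max_ext.
case=> p [hp /esym pg].
have : Mx f^-1 1 by case: (pselect (Mx f^-1 1)) => // h; exfalso; apply: hfi; apply: max_ext.
case=> r [hr /esym rg].
exact: (@max_noboth (size p + size r) f p r fnz (leqnn _) hp hr pg rg).
Qed.
End Max.
Definition goodT := {bi : set F * set F | good bi.1 bi.2}.

Lemma chevalley : good B0 I0 -> exists O : set F, [/\ subring_over iota O,
   (forall f, f != 0 -> O f \/ O f^-1) &
   (forall f, I0 f -> O f /\ (f = 0 \/ ~ O f^-1))].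
Proof.
move=> g0.
pose R : rel goodT := fun s t => `[< ((sval s).1 `<=` (sval t).1 /\ (sval s).2 `<=` (sval t).2)%classic >].
have Rrefl : forall t, R t t by move=> t; rewrite /R; apply/asboolP; split => u.
have Rtrans : forall r s t, R r s -> R s t -> R r t.
  move=> r s t; rewrite /R => /asboolP [h1 h2] /asboolP [h3 h4]; apply/asboolP; split => u hu.
  - by apply: h3; apply: h1.
  - by apply: h4; apply: h2.
have base (s : goodT) : (B0 `<=` (sval s).1)%classic /\ (I0 `<=` (sval s).2)%classic.
  by case: s => bi pf /=; case: pf => _ [_ h].
have gs (s : goodT) : good (sval s).1 (sval s).2 by case: s.
have ub : forall A : set goodT, total_on A R -> exists t, forall s, A s -> R s t.
  move=> A tot.
  pose Bu := [set u | B0 u \/ exists s, A s /\ (sval s).1 u]%classic.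
  pose Iu := [set u | I0 u \/ exists s, A s /\ (sval s).2 u]%classic.
  have two : forall (f1 f2 : goodT -> set F) (X1 X2 : set F),
      (forall s t, R s t -> (f1 s `<=` f1 t)%classic /\ (f2 s `<=` f2 t)%classic) ->
      (forall s, (X1 `<=` f1 s)%classic /\ (X2 `<=` f2 s)%classic) -> forall u v,
      (X1 u \/ exists s, A s /\ f1 s u) -> (X2 v \/ exists s, A s /\ f2 s v) ->
      (X1 u /\ X2 v) \/ exists s, [/\ A s, f1 s u & f2 s v].
    move=> f1 f2 X1 X2 mono bs u v [hu|[s [As hu]]] [hv|[t [At hv]]].
    - by left.
    - by right; exists t; split => //; apply: (bs t).1.
    - by right; exists s; split => //; apply: (bs s).2.
    - case: (tot s t As At) => hst; right.
      + by exists t; split => //; apply: (mono s t hst).1.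
      + by exists s; split => //; apply: (mono t s hst).2.
  have monoBB : forall s t, R s t -> ((sval s).1 `<=` (sval t).1)%classic /\ ((sval s).1 `<=` (sval t).1)%classic.
    by move=> s t; rewrite /R => /asboolP[h _].
  have monoBI : forall s t, R s t -> ((sval s).1 `<=` (sval t).1)%classic /\ ((sval s).2 `<=` (sval t).2)%classic.
    by move=> s t; rewrite /R => /asboolP.
  have monoII : forall s t, R s t -> ((sval s).2 `<=` (sval t).2)%classic /\ ((sval s).2 `<=` (sval t).2)%classic.
    by move=> s t; rewrite /R => /asboolP[_ h].
  have baseBB (s : goodT) : (B0 `<=` (sval s).1)%classic /\ (B0 `<=` (sval s).1)%classic by have [h _] := base s.
  have baseII (s : goodT) : (I0 `<=` (sval s).2)%classic /\ (I0 `<=` (sval s).2)%classic by have [_ h] := base s.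
  case: (g0) => -[sr0' IB0 I00 IB2 IM0] [I10 _].
  have gu : good Bu Iu.
    split; [split; first split | split].
    - by move=> k; left; apply: (sr_c sr0').
    - move=> u v hu hv; case: (two _ _ _ _ monoBB baseBB u v hu hv) => [[h1 h2]|[s [As h1 h2]]].
      + by left; apply: (sr_B sr0').
      + by right; exists s; split => //; case: (gs s) => -[h _ _ _ _] _; apply: (sr_B h).
    - move=> u v hu hv; case: (two _ _ _ _ monoBB baseBB u v hu hv) => [[h1 h2]|[s [As h1 h2]]].
      + by left; apply: (sr_M sr0').
      + by right; exists s; split => //; case: (gs s) => -[h _ _ _ _] _; apply: (sr_M h).
    - move=> u [hu|[s [As hu]]]; [by left; apply: IB0 | right; exists s; split => //].
      by case: (gs s) => -[_ h _ _ _] _; apply: h.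
    - by left.
    - move=> u v hu hv; case: (two _ _ _ _ monoII baseII u v hu hv) => [[h1 h2]|[s [As h1 h2]]].
      + by left; apply: IB2.
      + by right; exists s; split => //; case: (gs s) => -[_ _ _ h _] _; apply: h.
    - move=> u v hu hv; case: (two _ _ _ _ monoBI base u v hu hv) => [[h1 h2]|[s [As h1 h2]]].
      + by left; apply: IM0.
      + by right; exists s; split => //; case: (gs s) => -[_ _ _ _ h] _; apply: h.
    - case=> [|[s [As h]]]; first exact: I10.
      by case: (gs s) => _ [h1 _]; apply: h1.
    - by split => u hu; left.
  exists (exist _ (Bu, Iu) gu) => s As; rewrite /R; apply/asboolP; split => u hu /=; right; by exists s.
have [[[B M] gBM] hmax] := ZL_preorder (exist _ (B0, I0) g0) Rrefl Rtrans ub.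
have maxBM : forall B' I', good B' I' -> (B `<=` B')%classic -> (M `<=` I')%classic ->
   (B' `<=` B)%classic /\ (I' `<=` M)%classic.
  move=> B' I' g' h1 h2.
  have /asboolP := hmax (exist _ (B', I') g') (introT (asboolP _) (conj h1 h2)).
  by [].
have [[srB _ _ _ _] [M1 [_ I0M]]] := gBM.
exists B; split => //.
- exact: max_final gBM maxBM.
- move=> f /I0M hf; have [[_ MB _ _ MM] _] := gBM; split; first exact: MB.
  have [->|fnz] := eqVneq f 0; [by left | right => hfi].
  by apply: M1; rewrite -(mulfV fnz) mulrC; apply: MM.
Qed.
End Chev.
Definition gen_subring (K : finFieldType) (F : fieldType) (iota : {rmorphism K -> F}) (ts : seq F) : set F :=
  [set f | forall S, subring_over iota S -> (forall t, t \in ts -> S t) -> S f]%classic.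

Section Curve.
Variables (K : finFieldType) (F : fieldType) (iota : {rmorphism K -> F}).
Variables (q m : nat) (x y z : F) (al be : K).
Hypothesis hq2 : (2 <= q)%N.
Hypothesis hchar : [pchar F].-nat q.
Hypothesis hm : (0 < m)%N.
Hypothesis htr : forall P : {poly K}, P != 0 -> (map_poly iota P).[x] != 0.
Hypothesis hxy : x ^+ q + x = y ^+ q.+1.
Hypothesis hz : z ^+ m = y ^+ (q ^ 2) - y.
Hypothesis hab : al ^+ q + al = be ^+ q.+1.
Hypothesis hbe : be ^+ (q ^ 2) = be.
Hypothesis hgen : gen_subfield iota [:: x; y; z] = setT.

Definition Xa := x - iota al.
Definition Pb := y - iota be.
Definition Gx := Xa ^+ (q - 1) + 1.
Definition Hy := Pb ^+ (q ^ 2 - 1) - 1.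
Definition Sy := iota (be ^+ q) + iota be * Pb ^+ (q - 1) + Pb ^+ q.

Lemma hchar2 : [pchar F].-nat (q ^ 2)%N.
Proof. by rewrite pnatX hchar. Qed.

Lemma frobD n (u v : F) : [pchar F].-nat n -> (u + v) ^+ n = u ^+ n + v ^+ n.
Proof. by move=> h; rewrite exprDn_pchar. Qed.
Lemma frobB n (u v : F) : [pchar F].-nat n -> (u - v) ^+ n = u ^+ n - v ^+ n.
Proof. by move=> h; rewrite exprDn_pchar // exprNn_pchar. Qed.

Lemma expr_pred (u : F) n : (0 < n)%N -> u ^+ n = u * u ^+ (n - 1).
Proof. by move=> h; rewrite -exprS subn1 prednK. Qed.

Lemma R1 : Xa * Gx = Pb * Sy.
Proof.
have q0 : (0 < q)%N by apply: leq_trans hq2.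
rewrite /Gx mulrDr mulr1 -expr_pred // /Xa frobB // -rmorphXn.
have yE : y = iota be + Pb by rewrite /Pb addrC subrK.
have e1 : x ^+ q - iota (al ^+ q) + (x - iota al) = y ^+ q.+1 - iota (be ^+ q.+1).
  by rewrite -hxy -hab rmorphD; ring.
rewrite e1 exprSr {1 2}yE frobD // /Sy !rmorphXn (expr_pred Pb q0) [iota be ^+ q.+1]exprSr.
ring.
Qed.

Lemma R2 : Pb * Hy = z ^+ m.
Proof.
have q0 : (0 < (q ^ 2)%N)%N by rewrite expn_gt0 (@leq_trans 2).
rewrite /Hy mulrBr mulr1 -expr_pred // hz /Pb frobB ?hchar2 // -rmorphXn hbe.
ring.
Qed.

Let A := gen_subring iota [:: x; y; z].
Lemma A_sr : subring_over iota A.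
Proof.
split.
- by move=> k S hS _; apply: (sr_c hS).
- by move=> u v hu hv S hS hts; apply: (sr_B hS); [apply: hu|apply: hv].
- by move=> u v hu hv S hS hts; apply: (sr_M hS); [apply: hu|apply: hv].
Qed.
Lemma A_x : A x. Proof. by move=> S _ h; apply: h; rewrite inE eqxx. Qed.
Lemma A_y : A y. Proof. by move=> S _ h; apply: h; rewrite !inE eqxx orbT. Qed.
Lemma A_z : A z. Proof. by move=> S _ h; apply: h; rewrite !inE eqxx !orbT. Qed.
Lemma A_min S : subring_over iota S -> S x -> S y -> S z -> forall f, A f -> S f.
Proof. by move=> hS hx hy hz' f hf; apply: hf => // t; rewrite !inE => /or3P[] /eqP ->. Qed.

Lemma A_Xa : A Xa. Proof. by apply: (sr_B A_sr); [apply: A_x | apply: (sr_c A_sr)]. Qed.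
Lemma A_Pb : A Pb. Proof. by apply: (sr_B A_sr); [apply: A_y | apply: (sr_c A_sr)]. Qed.
Lemma A_Gx : A Gx. Proof. by apply: (sr_D A_sr); [apply: (sr_X A_sr); apply: A_Xa | apply: (sr1 A_sr)]. Qed.
Lemma A_Hy : A Hy. Proof. by apply: (sr_B A_sr); [apply: (sr_X A_sr); apply: A_Pb | apply: (sr1 A_sr)]. Qed.
Lemma A_Sy : A Sy.
Proof.
apply: (sr_D A_sr); last by apply: (sr_X A_sr); apply: A_Pb.
apply: (sr_D A_sr); first by apply: (sr_c A_sr).
by apply: (sr_M A_sr); [apply: (sr_c A_sr) | apply: (sr_X A_sr); apply: A_Pb].
Qed.

Lemma A_dec N : A N -> exists c a b e, [/\ A a, A b, A e & N = iota c + Xa * a + Pb * b + z * e].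
Proof.
move=> hN.
pose D : set F := fun N => exists c a b e, [/\ A a, A b, A e & N = iota c + Xa * a + Pb * b + z * e].
apply: (A_min (S:=D)) hN.
- split.
  + move=> k; exists k, 0, 0, 0; split; try apply: (sr0 A_sr); ring.
  + move=> u v [c [a [b [e [ha hb he ->]]]]] [c' [a' [b' [e' [ha' hb' he' ->]]]]].
    exists (c - c'), (a - a'), (b - b'), (e - e'); split; try by apply: (sr_B A_sr).
    rewrite rmorphB; ring.
  + move=> u v [c [a [b [e [ha hb he ->]]]]] [c' [a' [b' [e' [ha' hb' he' ->]]]]].
    set J' := Xa * a' + Pb * b' + z * e'.
    have AJ : A J'.
      apply: (sr_D A_sr); [apply: (sr_D A_sr)|]; apply: (sr_M A_sr) => //;
        [exact: A_Xa | exact: A_Pb | exact: A_z].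
    exists (c * c'), (iota c * a' + iota c' * a + a * J'), (iota c * b' + iota c' * b + b * J'),
      (iota c * e' + iota c' * e + e * J').
    split; try by do 2?[apply: (sr_D A_sr)]; apply: (sr_M A_sr) => //; apply: (sr_c A_sr).
    rewrite rmorphM /J'; ring.
- exists al, 1, 0, 0; split; try apply: (sr0 A_sr); try apply: (sr1 A_sr).
  rewrite /Xa; ring.
- exists be, 0, 1, 0; split; try apply: (sr0 A_sr); try apply: (sr1 A_sr).
  rewrite /Pb; ring.
- exists 0, 0, 0, 1; split; try apply: (sr0 A_sr); try apply: (sr1 A_sr).
  rewrite rmorph0; ring.
Qed.

Definition phiy : {rmorphism {poly K} -> F} := horner_morph (fun t : K => mulrC y (iota t)).
Lemma phiyE p : phiy p = (map_poly iota p).[y]. Proof. by []. Qed.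
Lemma phiyX : phiy 'X = y. Proof. exact: horner_morphX. Qed.
Lemma phiyC c : phiy c%:P = iota c. Proof. exact: horner_morphC. Qed.
Lemma A_phi c : A (phiy c).
Proof.
rewrite phiyE; apply: (sr_horner A_sr); last exact: A_y.
by move=> i; rewrite coef_map; apply: (sr_c A_sr).
Qed.

Lemma A_int N : A N -> integralOver phiy N.
Proof.
have hS : subring_over iota [set f | integralOver phiy f]%classic.
  split.
  - by move=> k; rewrite /= -phiyC; exact: (integral_id phiy _).
  - by move=> u v hu hv; apply: integral_sub.
  - by move=> u v hu hv; apply: integral_mul.
apply: (A_min hS).
- pose p := 'X^q + ('X - (y ^+ q.+1)%:P).
  apply: (@integral_root_monic _ _ phiy x p).
  + by rewrite monicE lead_coefDl ?lead_coefXn // size_XsubC size_polyXn ltnS.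
  + by apply/eqP; rewrite hornerD hornerXn hornerXsubC -hxy addrA subrr.
  + apply/integral_poly => i; rewrite coefD coefXn coefB coefX coefC.
    apply: integral_add; first exact: integral_nat.
    apply: integral_sub; first exact: integral_nat.
    case: (i == 0%N); last exact: integral0.
    rewrite -phiyX -rmorphXn. exact: (@integral_id _ _ phiy ('X^(q.+1))).
- by have h := integral_id phiy 'X; rewrite phiyX in h.
- pose p := 'X^m - (y ^+ (q ^ 2) - y)%:P.
  apply: (@integral_root_monic _ _ phiy z p).
  + exact: monicXnsubC.
  + by apply/eqP; rewrite !hornerE hz subrr.
  + apply/integral_poly => i; rewrite coefB coefXn coefC.
    apply: integral_sub; first exact: integral_nat.
    case: (i == 0%N); last exact: integral0.
    have -> : y ^+ (q ^ 2) - y = phiy ('X ^+ (q ^ 2) - 'X) by rewrite rmorphB rmorphXn /= phiyX.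
    exact: (integral_id phiy _).
Qed.

Lemma poly_split (R : nzRingType) (p : {poly R}) : p = (p`_0)%:P + drop_poly 1 p * 'X.
Proof.
rewrite -{1}(poly_take_drop 1 p) expr1; congr (_ + _).
by apply/polyP => i; rewrite coef_take_poly coefC; case: i.
Qed.

Lemma horner_split (p : {poly {poly K}}) (N : F) :
  (map_poly phiy p).[N] = phiy p`_0 + N * (map_poly phiy (drop_poly 1 p)).[N].
Proof.
rewrite {1}(poly_split p) rmorphD rmorphM /= map_polyC map_polyX !hornerE.
by rewrite mulrC.
Qed.

Lemma A_c0 N : A N -> N != 0 -> exists c0 : {poly K}, c0 != 0 /\ exists w, A w /\ phiy c0 = N * w.
Proof.
move=> hN nz; have [p mp rp] := A_int hN.
have pnz : p != 0 := monic_neq0 mp.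
have [n hn] := ubnP (size p).
elim: n p hn pnz rp {mp} => // n IH p hs pnz rp.
have e := horner_split p N.
have AW : A (map_poly phiy (drop_poly 1 p)).[N].
  by apply: (sr_horner A_sr) => // i; rewrite coef_map; apply: A_phi.
have [h0|h0] := eqVneq p`_0 0.
  have dnz : drop_poly 1 p != 0.
    by apply: contraNneq pnz => d0; rewrite (poly_split p) d0 h0 mul0r addr0.
  apply: (IH (drop_poly 1 p)) => //.
    by rewrite size_drop_poly; move: hs; rewrite ltnS => hs; rewrite subn1 -ltnS prednK // size_poly_gt0.
  move: rp; rewrite /root e h0 rmorph0 add0r mulf_eq0 (negPf nz) /=.
  by [].
exists p`_0; split => //; exists (- (map_poly phiy (drop_poly 1 p)).[N]); split.
  by apply: (sr_N A_sr).
by apply/eqP; rewrite mulrN -subr_eq0 opprK -e.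
Qed.
Section Val.
Variables (O : set F) (vO : valuation_ring iota setT O) (hXO : mx O Xa) (hPO : mx O Pb).
Let sf := sfT iota.
Let srO := vr_sr vO.

Lemma O_Xa : O Xa. Proof. exact: mx_O hXO. Qed.
Lemma O_Pb : O Pb. Proof. exact: mx_O hPO. Qed.
Lemma O_Hy : O Hy. Proof. by apply: (sr_B srO); [apply: (sr_X srO); apply: O_Pb | apply: (sr1 srO)]. Qed.
Lemma O_Gx : O Gx. Proof. by apply: (sr_D srO); [apply: (sr_X srO); apply: O_Xa | apply: (sr1 srO)]. Qed.

Lemma z_mx : mx O z.
Proof.
have zm : mx O (z ^+ m) by rewrite -R2 mulrC; apply: (mxM vO) => //; apply: O_Hy.
have zO : O z.
  case: (pselect (O z)) => // nz; exfalso.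
  have z0 : z != 0 by apply/eqP => z0; apply: nz; rewrite z0; apply: (sr0 srO).
  have [|zi] := vr_or vO (I : setT z) (elimN eqP z0); first by [].
  apply: (mx1 vO); rewrite -(mulVf (expf_neq0 m z0)) -exprVn.
  by apply: (mxM vO) => //; apply: (sr_X srO).
split => //; case: (pselect (z = 0)) => [->|z0]; [by left | right => zi].
apply: (mx_ninv zm); first by apply/eqP; rewrite expf_eq0 negb_and; apply/orP; right; apply/eqP.
by rewrite -exprVn; apply: (sr_X srO).
Qed.
Lemma O_z : O z. Proof. exact: mx_O z_mx. Qed.

Lemma A_O f : A f -> O f.
Proof.
apply: (A_min srO).
- by rewrite -(subrK (iota al) x); apply: (sr_D srO); [apply: O_Xa | apply: (sr_c srO)].
- by rewrite -(subrK (iota be) y); apply: (sr_D srO); [apply: O_Pb | apply: (sr_c srO)].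
- exact: O_z.
Qed.

Lemma Gx_u : ~ mx O Gx.
Proof.
rewrite /Gx addrC; apply: (unitD sf vO); [exact: (sr1 srO) | exact: (mx1 vO) |].
have -> : (q - 1 = (q - 2).+1)%N by rewrite -subSn // subSS.
by rewrite exprSr; apply: (mxM vO) => //; apply: (sr_X srO); apply: O_Xa.
Qed.

Lemma Hy_u : ~ mx O Hy.
Proof.
rewrite /Hy addrC; apply: (unitD sf vO); first exact: (sr_N srO (sr1 srO)).
  apply: unit_nmx; first by apply/eqP; rewrite oppr_eq0 oner_eq0.
  by rewrite invrN invr1; exact: (sr_N srO (sr1 srO)).
have q0 : (0 < (q ^ 2)%N - 1)%N.
  by rewrite subn_gt0 (@leq_trans 2) // (@leq_trans (2 ^ 2)) // leq_exp2r.
rewrite (expr_pred _ q0) mulrC; apply: (mxM vO) => //.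
by apply: (sr_X srO); apply: O_Pb.
Qed.

Lemma z_nz : z != 0.
Proof.
apply/eqP => z0.
have hnz : Hy != 0 by apply/eqP => h0; apply: Hy_u; rewrite h0; apply: (mx0 vO).
have gnz : Gx != 0 by apply/eqP => h0; apply: Gx_u; rewrite h0; apply: (mx0 vO).
have : Pb * Hy = 0 by rewrite R2 z0 expr0n eqn0Ngt hm.
move/eqP; rewrite mulf_eq0 (negPf hnz) orbF => /eqP p0.
have : Xa * Gx = 0 by rewrite R1 p0 mul0r.
move/eqP; rewrite mulf_eq0 (negPf gnz) orbF => /eqP x0.
have := htr (P := 'X - al%:P); rewrite polyXsubC_eq0 => /(_ isT).
by rewrite map_polyXsubC hornerXsubC -/Xa x0 eqxx.
Qed.
End Val.

Section Two.
Variables (O1 O2 : set F) (v1 : valuation_ring iota setT O1) (v2 : valuation_ring iota setT O2).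
Hypotheses (hX1 : mx O1 Xa) (hP1 : mx O1 Pb) (hX2 : mx O2 Xa) (hP2 : mx O2 Pb).
Let sf := sfT iota.

Definition U12 u := [/\ O1 u, ~ mx O1 u, O2 u & ~ mx O2 u].

Lemma U12M u v : U12 u -> U12 v -> U12 (u * v).
Proof.
case=> a1 b1 c1 d1 [a2 b2 c2 d2]; split.
- exact: (sr_M (vr_sr v1)).
- exact: (unitM v1).
- exact: (sr_M (vr_sr v2)).
- exact: (unitM v2).
Qed.
Lemma U12V u : U12 u -> U12 u^-1.
Proof.
case=> a1 b1 c1 d1; have [e1 f1] := unitV v1 a1 b1; have [e2 f2] := unitV v2 c1 d1.
by split.
Qed.
Lemma U12_nz u : U12 u -> u != 0.
Proof. by case=> a b _ _; apply/eqP => u0; apply: b; rewrite u0; apply: (mx0 v1). Qed.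

Lemma U12_A (N : F) c a b e : A a -> A b -> A e -> c != 0 ->
  U12 (iota c + Xa * a + Pb * b + z * e).
Proof.
move=> ha hb he cnz.
have gen O (vO : valuation_ring iota setT O) : mx O Xa -> mx O Pb ->
    O (iota c + Xa * a + Pb * b + z * e) /\ ~ mx O (iota c + Xa * a + Pb * b + z * e).
  move=> hX hP; have srO := vr_sr vO.
  have hj : mx O (Xa * a + Pb * b + z * e).
    apply: (mxD sf vO); [apply: (mxD sf vO)|]; rewrite mulrC; apply: (mxM vO) => //;
      try (by apply: (A_O vO)); exact: z_mx.
  rewrite -!addrA; split.
    by apply: (sr_D srO); [apply: (sr_c srO) | rewrite !addrA; apply: (mx_O hj)].
  apply: (unitD sf vO); [exact: (sr_c srO) | exact: (const_nmx vO) | by rewrite !addrA].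
have [g1 g2] := gen O1 v1 hX1 hP1; have [g3 g4] := gen O2 v2 hX2 hP2.
by split.
Qed.

Lemma GH_U12 : U12 (Gx * Hy).
Proof.
apply: U12M; split; try exact: (O_Gx v1); try exact: (O_Gx v2); try exact: (O_Hy v1);
  try exact: (O_Hy v2); try exact: (Gx_u v1); try exact: (Gx_u v2); try exact: (Hy_u v1);
  exact: (Hy_u v2).
Qed.

Lemma desc j N : A N -> N != 0 ->
  (exists k u, U12 u /\ N = z ^+ k * u) \/ (exists N' w, [/\ A N', U12 w & N = z ^+ j * N' * w]).
Proof.
move=> hN nz; elim: j => [|j IH].
  right; exists N, 1; split => //; last by rewrite expr0 mul1r mulr1.
  split; try exact: (sr1 (vr_sr v1)); try exact: (sr1 (vr_sr v2)); [exact: (mx1 v1) | exact: (mx1 v2)].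
case: IH => [|[N' [w [hN' hw e]]]]; first by left.
have [c [a [b [f [ha hb hf eN']]]]] := A_dec hN'.
have [c0|cnz] := eqVneq c 0; last first.
  left; exists j, (N' * w); split; last by rewrite e mulrA.
  by apply: U12M => //; rewrite eN'; apply: U12_A.
right.
pose N'' := z ^+ (m - 1) * (Sy * a + b * Gx) + f * Gx * Hy.
exists N'', (w * (Gx * Hy)^-1); split.
- apply: (sr_D A_sr); last by apply: (sr_M A_sr); [apply: (sr_M A_sr) => //; exact: A_Gx | exact: A_Hy].
  apply: (sr_M A_sr); first by apply: (sr_X A_sr); exact: A_z.
  apply: (sr_D A_sr); apply: (sr_M A_sr) => //; [exact: A_Sy | exact: A_Gx].
- by apply: U12M => //; apply: U12V; apply: GH_U12.
- have ghnz := U12_nz GH_U12.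
  have key : N' * (Gx * Hy) = z * N''.
    have zm : z * z ^+ (m - 1) = Pb * Hy by rewrite -expr_pred // R2.
    rewrite /N'' [RHS]mulrDr [in RHS]mulrA zm eN' c0 rmorph0 add0r.
    transitivity ((Xa * Gx) * a * Hy + Pb * b * Gx * Hy + z * f * Gx * Hy); first by ring.
    rewrite R1; ring.
  have eN : N' = z * N'' * (Gx * Hy)^-1 by rewrite -key mulfK.
  by rewrite e eN exprSr; ring.
Qed.
Lemma decomp N : A N -> N != 0 -> exists k u, U12 u /\ N = z ^+ k * u.
Proof.
move=> hN nz.
have [c0 [c0nz [w0 [Aw0 e0]]]] := A_c0 hN nz.
have [r [w' hw' ec0]] := multiplicity_XsubC c0 be.
rewrite c0nz /= in hw'.
have srO := vr_sr v1.
have hPb : phiy ('X - be%:P) = Pb by rewrite rmorphB /= phiyX phiyC.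
have uw' : O1 (phiy w') /\ ~ mx O1 (phiy w').
  have : root (w' - (w'.[be])%:P) be by rewrite /root hornerD hornerN hornerC subrr.
  case/factor_theorem => q' eq'.
  have -> : phiy w' = iota (w'.[be]) + phiy q' * Pb.
    by rewrite -phiyC -hPb -rmorphM -rmorphD -eq' addrC subrK.
  have hq' : O1 (phiy q') by apply: (A_O v1 hX1 hP1); apply: A_phi.
  have hm' : mx O1 (phiy q' * Pb) by apply: (mxM v1).
  split; first by apply: (sr_D srO); [apply: (sr_c srO) | apply: (mx_O hm')].
  by apply: (unitD sf v1) => //; [apply: (sr_c srO) | apply: (const_nmx v1)].
case: (desc (m * r).+1 hN nz) => // [[N' [w [hN' hw e]]]].
exfalso.
have znz := z_nz v1 hX1 hP1.
have zr : Pb ^+ r * Hy ^+ r = z ^+ (m * r) by rewrite -exprMn R2 exprM.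
have pc : phiy c0 = phiy w' * Pb ^+ r by rewrite ec0 rmorphM rmorphXn hPb.
have : phiy w' * z ^+ (m * r) = z ^+ (m * r) * (z * (N' * w * w0 * Hy ^+ r)).
  rewrite -[in LHS]zr mulrA -pc e0 e exprSr; ring.
rewrite [LHS]mulrC => /(mulfI (expf_neq0 _ znz)) ew.
apply: uw'.2; rewrite ew mulrC; apply: (mxM v1); last exact: (z_mx v1 hP1).
have hw1 : O1 w by case: hw.
apply: (sr_M srO); last by apply: (sr_X srO); apply: (O_Hy v1).
apply: (sr_M srO); last by apply: (A_O v1 hX1 hP1).
by apply: (sr_M srO) => //; apply: (A_O v1 hX1 hP1).
Qed.

Lemma Frac f : exists N D, [/\ A N, A D & f = N / D].
Proof.
pose S : set F := fun f => exists N D, [/\ A N, A D & f = N / D].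
have hS : subfield_over iota S.
  split.
  - by move=> k; exists (iota k), 1; split; [apply: (sr_c A_sr) | apply: (sr1 A_sr) | rewrite divr1].
  - move=> u v [N [D [hN hD ->]]] [N' [D' [hN' hD' ->]]].
    have [D0|Dnz] := eqVneq D 0.
      exists (- N'), D'; split => //; first by apply: (sr_N A_sr).
      by rewrite D0 invr0 mulr0 sub0r mulNr.
    have [D0'|Dnz'] := eqVneq D' 0.
      by exists N, D; split => //; rewrite D0' invr0 mulr0 subr0.
    exists (N * D' - N' * D), (D * D'); split.
    + by apply: (sr_B A_sr); apply: (sr_M A_sr).
    + by apply: (sr_M A_sr).
    + by field; rewrite Dnz Dnz'.
  - move=> u v [N [D [hN hD ->]]] [N' [D' [hN' hD' ->]]].
    exists (N * N'), (D * D'); split; try by apply: (sr_M A_sr).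
    by rewrite invfM; ring.
  - move=> u [N [D [hN hD ->]]]; exists D, N; split => //.
    by rewrite invfM invrK mulrC.
have hx : S x by exists x, 1; split; [apply: A_x | apply: (sr1 A_sr) | rewrite divr1].
have hy : S y by exists y, 1; split; [apply: A_y | apply: (sr1 A_sr) | rewrite divr1].
have hz' : S z by exists z, 1; split; [apply: A_z | apply: (sr1 A_sr) | rewrite divr1].
have : gen_subfield iota [:: x; y; z] f by rewrite hgen.
apply: (gen_min hS) => t; rewrite !inE => /or3P[] /eqP -> //.
Qed.

Lemma uniq12 f : O1 f -> O2 f.
Proof.
move=> hf; have [N [D [hN hD ef]]] := Frac f.
have sr2 := vr_sr v2.
have [N0|Nnz] := eqVneq N 0; first by rewrite ef N0 mul0r; apply: (sr0 sr2).
have [D0|Dnz] := eqVneq D 0; first by rewrite ef D0 invr0 mulr0; apply: (sr0 sr2).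
have [k [u [hu eN]]] := decomp hN Nnz.
have [l [u' [hu' eD]]] := decomp hD Dnz.
have znz := z_nz v1 hX1 hP1.
have unz := U12_nz hu; have unz' := U12_nz hu'.
case: (leqP l k) => hlk.
  have -> : f = z ^+ (k - l) * (u * u'^-1).
    rewrite ef eN eD -(subnK hlk) exprD subnK //.
    by field; rewrite unz' expf_neq0.
  apply: (sr_M sr2); first by apply: (sr_X sr2); apply: (O_z v2 hP2).
  apply: (sr_M sr2); first by case: hu.
  by case: (U12V hu').
exfalso; apply: (mx_ninv (z_mx v1 hP1)); first exact/eqP.
have el : z ^+ l = z ^+ (l - k.+1) * (z * z ^+ k) by rewrite -exprS -exprD subnK.
have -> : z^-1 = f * z ^+ (l - k.+1) * u' * u^-1.
  rewrite ef eN eD el.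
  by field; rewrite unz unz' znz !expf_neq0.
have sr1' := vr_sr v1.
apply: (sr_M sr1'); last by case: (U12V hu).
apply: (sr_M sr1'); last by case: hu'.
apply: (sr_M sr1') => //; apply: (sr_X sr1'); apply: (O_z v1 hP1).
Qed.
End Two.
End Curve.
Section Main.
Variables (K : finFieldType) (F : fieldType) (iota : {rmorphism K -> F}).
Variables (q m : nat) (x y z : F) (a b c d : K) (g : {rmorphism F -> F}).
Hypothesis hq2 : (2 <= q)%N.
Hypothesis hchar : [pchar F].-nat q.
Hypothesis hm : (0 < m)%N.
Hypothesis htr : forall P : {poly K}, P != 0 -> (map_poly iota P).[x] != 0.
Hypothesis hgen : gen_subfield iota [:: x; y; z] = setT.
Hypothesis hxy : x ^+ q + x = y ^+ q.+1.
Hypothesis hz : z ^+ m = y ^+ (q ^ 2) - y.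
Hypothesis ha0 : a != 0.
Hypothesis hbij : bijective g.
Hypothesis hgK : forall t : K, g (iota t) = iota t.
Hypothesis hgx : g x = iota (a ^+ q.+1) * x + iota (a * b ^+ q) * y + iota c.
Hypothesis hgy : g y = iota a * y + iota b.

Let E := gen_subfield iota [:: x; y].
Let sfE : subfield_over iota E := gen_sf iota [:: x; y].
Let Ex : E x. Proof. by apply: gen_in; rewrite inE eqxx. Qed.
Let Ey : E y. Proof. by apply: gen_in; rewrite !inE eqxx orbT. Qed.
Let srE := sf_sr sfE.

Lemma gE f : E f -> E (g f).
Proof.
have hS : subfield_over iota [set u | E (g u)]%classic.
  split => /=.
  - by move=> k; rewrite hgK; apply: (sr_c srE).
  - by move=> u v hu hv; rewrite rmorphB; apply: (sr_B srE).
  - by move=> u v hu hv; rewrite rmorphM; apply: (sr_M srE).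
  - by move=> u hu; rewrite fmorphV; apply: (sf_V sfE).
apply: (gen_min hS) => t; rewrite !inE => /orP[] /eqP -> /=.
- rewrite hgx; apply: (sr_D srE); last by apply: (sr_c srE).
  by apply: (sr_D srE); apply: (sr_M srE) => //; apply: (sr_c srE).
- by rewrite hgy; apply: (sr_D srE); [apply: (sr_M srE) => //; apply: (sr_c srE) | apply: (sr_c srE)].
Qed.

Lemma Eg f : E f -> exists v, E v /\ f = g v.
Proof.
have hS : subfield_over iota [set u | exists v, E v /\ u = g v]%classic.
  split => /=.
  - by move=> k; exists (iota k); split; [apply: (sr_c srE) | rewrite hgK].
  - move=> u v [u' [hu ->]] [v' [hv ->]]; exists (u' - v'); split; last by rewrite rmorphB.
    exact: (sr_B srE).
  - move=> u v [u' [hu ->]] [v' [hv ->]]; exists (u' * v'); split; last by rewrite rmorphM.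
    exact: (sr_M srE).
  - move=> u [u' [hu ->]]; exists u'^-1; split; last by rewrite fmorphV.
    exact: (sf_V sfE).
have gy' : g (iota a^-1 * (y - iota b)) = y.
  by rewrite rmorphM rmorphB hgy !hgK fmorphV addrK mulrA mulVf ?mul1r // fmorph_eq0.
have Ey' : E (iota a^-1 * (y - iota b)).
  by apply: (sr_M srE); [apply: (sr_c srE) | apply: (sr_B srE) => //; apply: (sr_c srE)].
apply: (gen_min hS) => t; rewrite !inE => /orP[] /eqP -> /=.
- pose y' := iota a^-1 * (y - iota b).
  have gy'' : g y' = y := gy'.
  have Ey'' : E y' := Ey'.
  pose v := iota (a ^+ q.+1)^-1 * (x - iota (a * b ^+ q) * y' - iota c).
  exists v; split.
    apply: (sr_M srE); first by apply: (sr_c srE).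
    apply: (sr_B srE); last by apply: (sr_c srE).
    by apply: (sr_B srE) => //; apply: (sr_M srE) => //; apply: (sr_c srE).
  have anz : iota (a ^+ q.+1) != 0 by rewrite fmorph_eq0 expf_neq0.
  rewrite /v !(rmorphM g) !(rmorphB g) !(rmorphM g) !(rmorphB g) hgx hgy !hgK !fmorphV.
  by field; rewrite anz fmorph_eq0 ha0.
- by exists (iota a^-1 * (y - iota b)).
Qed.

Lemma ginj : injective g. Proof. exact: bij_inj. Qed.

Section Pt.
Variables (al be : K).
Hypothesis hab : al ^+ q + al = be ^+ q.+1.
Hypothesis hbe : be ^+ (q ^ 2) = be.

Lemma dirQP : (exists Q, is_Q_ab iota x y al be Q /\ (g @` Q)%classic = Q) ->
              (exists P, is_P_ab iota x y al be P /\ (g @` P)%classic = P).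
Proof.
move=> [Q [[hQ hP] hgQ]]; exists (Q `&` E)%classic; split => //.
apply/seteqP; split => f /=.
- case=> u [hu hEu] <-; split; last exact: gE.
  by rewrite -hgQ; exists u.
- case=> hf hEf; have hf' : (g @` Q)%classic f by rewrite hgQ.
  case: hf' => u hu eu.
  have [v [hv ev]] := Eg hEf.
  have uv : u = v by apply: ginj; rewrite eu.
  by exists u; [split => //; rewrite uv | exact: eu].
Qed.

Lemma dirPQ : (exists P, is_P_ab iota x y al be P /\ (g @` P)%classic = P) ->
              (exists Q, is_Q_ab iota x y al be Q /\ (g @` Q)%classic = Q).
Proof.
move=> [P [[[OP [vOP eP]] [hXP hPP]] hgP]].
have mxP : P = mx OP by rewrite eP.
rewrite mxP in hXP hPP hgP.
have Xnz : Xa iota x al != 0.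
  have := htr (P := 'X - al%:P); rewrite polyXsubC_eq0 => /(_ isT).
  by rewrite map_polyXsubC hornerXsubC.
have gin u : mx OP u -> mx OP (g u) by move=> hu; rewrite -hgP; exists u.
have EX : E (Xa iota x al) by apply: (sr_B srE) => //; apply: (sr_c srE).
have EP : E (Pb iota y be) by apply: (sr_B srE) => //; apply: (sr_c srE).
set k1 := a ^+ q.+1 * al + a * b ^+ q * be + c - al.
set k2 := a * be + b - be.
have gX : g (Xa iota x al) = iota (a ^+ q.+1) * Xa iota x al + iota (a * b ^+ q) * Pb iota y be + iota k1.
  by rewrite /Xa /Pb rmorphB hgx hgK /k1 !rmorphB !rmorphD !rmorphM; ring.
have gP : g (Pb iota y be) = iota a * Pb iota y be + iota k2.
  by rewrite /Pb rmorphB hgy hgK /k2 !rmorphB !rmorphD !rmorphM; ring.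
have srOP := vr_sr vOP.
have k10 : k1 = 0.
  apply: (nmx_const vOP); have := gin _ hXP; rewrite gX => h.
  have -> : iota k1 = (iota (a ^+ q.+1) * Xa iota x al + iota (a * b ^+ q) * Pb iota y be + iota k1)
     - (iota (a ^+ q.+1) * Xa iota x al + iota (a * b ^+ q) * Pb iota y be) by ring.
  apply: (mxB sfE vOP) => //.
  by apply: (mxD sfE vOP); apply: (mxM vOP) => //; apply: (sr_c srOP).
have k20 : k2 = 0.
  apply: (nmx_const vOP); have := gin _ hPP; rewrite gP => h.
  have -> : iota k2 = (iota a * Pb iota y be + iota k2) - iota a * Pb iota y be by ring.
  by apply: (mxB sfE vOP) => //; apply: (mxM vOP) => //; apply: (sr_c srOP).
rewrite k10 rmorph0 addr0 in gX; rewrite k20 rmorph0 addr0 in gP.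
have gd : good iota OP (mx OP) OP (mx OP).
  split; [split => // | split].
  - by move=> u; apply: mx_O.
  - exact: (mx0 vOP).
  - by move=> u v hu hv; apply: (mxB sfE vOP).
  - by move=> r u hr hu; apply: (mxM vOP).
  - exact: (mx1 vOP).
  - by split.
have [O [srO Oor OP_O]] := chevalley gd.
have hXO : mx O (Xa iota x al) by apply: OP_O.
have hPO : mx O (Pb iota y be) by apply: OP_O.
have vO : valuation_ring iota setT O.
  split => //.
  - by case: srO.
  - by move=> u v hu hv; split; [apply: (sr_B srO) | apply: (sr_M srO)].
  - exists (Xa iota x al)^-1; split => //; exact: (mx_ninv hXO (elimN eqP Xnz)).
  - by move=> f _ /eqP fnz; apply: Oor.
exists (mx O); split.
  split; first by exists O.
  split; last by split; split.
  exists (O `&` E)%classic; split.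
    split.
    - by move=> u [].
    - by move=> k; split; [apply: (sr_c srO) | apply: (sr_c srE)].
    - move=> u v [hu hEu] [hv hEv]; split; split.
      + exact: (sr_B srO).
      + exact: (sr_B srE).
      + exact: (sr_M srO).
      + exact: (sr_M srE).
    - exists (Xa iota x al)^-1; split; first exact: (sf_V sfE).
      by case=> h _; exact: (mx_ninv hXO (elimN eqP Xnz) h).
    - move=> f hEf /eqP fnz; case: (Oor f fnz) => h; [left | right]; split => //.
      exact: (sf_V sfE).
  apply/seteqP; split => f /=.
  - by case=> -[hf hfi] hEf; split; [split | case: hfi => [->|hn]; [left | right => -[]]].
  - case=> -[hf hEf] hfi; split => //; split => //.
    case: hfi => [->|hn]; [by left | right => h; apply: hn; split => //; exact: (sf_V sfE)].
have [gi gK gKi] := hbij.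
pose O' := [set f | O (g f)]%classic.
have vO' : valuation_ring iota setT O'.
  rewrite /O'; split => //=.
  - by move=> k; rewrite hgK; apply: (sr_c srO).
  - by move=> u v hu hv; rewrite rmorphB rmorphM; split; [apply: (sr_B srO) | apply: (sr_M srO)].
  - exists (gi (Xa iota x al)^-1); split => //; rewrite gKi.
    exact: (mx_ninv hXO (elimN eqP Xnz)).
  - by move=> f _ fnz; rewrite fmorphV; apply: Oor; rewrite fmorph_eq0; apply/eqP.
have mxO' u : mx O' u <-> mx O (g u).
  rewrite /mx /O' /= fmorphV; split; case=> h1 h2; split => //.
  - by case: h2 => [->|h]; [left; rewrite rmorph0 | right].
  - case: h2 => [/eqP|h]; [rewrite fmorph_eq0 => /eqP ->; by left | by right].
have hXO' : mx O' (Xa iota x al).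
  apply/mxO'; rewrite gX; apply: (mxD (sfT iota) vO); apply: (mxM vO) => //; apply: (sr_c srO).
have hPO' : mx O' (Pb iota y be).
  by apply/mxO'; rewrite gP; apply: (mxM vO) => //; apply: (sr_c srO).
have u1 := uniq12 hq2 hchar hm htr hxy hz hab hbe hgen vO vO' hXO hPO hXO' hPO'.
have u2 := uniq12 hq2 hchar hm htr hxy hz hab hbe hgen vO' vO hXO' hPO' hXO hPO.
have eO f : O f <-> O (g f) by split; [apply: u1 | apply: u2].
have emx f : mx O f <-> mx O (g f).
  split.
  - case=> h1 h2; split; first exact: (eO f).1 h1.
    case: h2 => [->|h]; [by left; rewrite rmorph0 | right => hi; apply: h; apply/(eO f^-1).2; rewrite fmorphV; exact: hi].
  - case=> h1 h2; split; first exact: (eO f).2 h1.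
    case: h2 => [/eqP|h]; [by rewrite fmorph_eq0 => /eqP ->; left | right => hi; apply: h; rewrite -fmorphV; exact: (eO f^-1).1 hi].
apply/seteqP; split => f /=.
- by case=> u hu <-; apply/(emx u).
- move=> hf; exists (gi f); last exact: gKi.
  by apply/(emx (gi f)); rewrite gKi.
Qed.
End Pt.
End Main.

Unset Implicit Arguments. Set Strict Implicit.

Theorem lemma4p1
  (p q k n : nat) (K : finFieldType) (F : fieldType) (iota : {rmorphism K -> F})
  (x y z : F) (a b c d : K) (g : {rmorphism F -> F}) :
  prime p -> (0 < k)%N -> q = (p ^ k)%N -> odd n ->
  #|K| = (q ^ (2 * n))%N ->
  let m := ((q ^ n + 1) %/ (q + 1))%N in
  (* F is the function field C_n = F_{q^{2n}}(x,y,z) *)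
  (forall P : {poly K}, P != 0 -> (map_poly iota P).[x] != 0) ->
  gen_subfield iota [:: x; y; z] = setT ->
  x ^+ q + x = y ^+ q.+1 ->
  z ^+ m = y ^+ (q ^ 2) - y ->
  (* g = [a,b,c,d] \in B(Q_infty) *)
  a ^+ (q ^ 2) = a -> a != 0 -> b ^+ (q ^ 2) = b -> c ^+ (q ^ 2) = c ->
  c ^+ q + c = b ^+ q.+1 -> d ^+ m = a ->
  bijective g -> (forall t : K, g (iota t) = iota t) ->
  g x = iota (a ^+ q.+1) * x + iota (a * b ^+ q) * y + iota c ->
  g y = iota a * y + iota b ->
  g z = iota d * z ->
  #|[set ab : K * K | [&& ab.1 ^+ (q ^ 2) == ab.1, ab.2 ^+ (q ^ 2) == ab.2,
        ab.1 ^+ q + ab.1 == ab.2 ^+ q.+1 &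
        `[< exists Q, is_Q_ab iota x y ab.1 ab.2 Q /\ (g @` Q)%classic = Q >]]]|
  = #|[set ab : K * K | [&& ab.1 ^+ (q ^ 2) == ab.1, ab.2 ^+ (q ^ 2) == ab.2,
        ab.1 ^+ q + ab.1 == ab.2 ^+ q.+1 &
        `[< exists P, is_P_ab iota x y ab.1 ab.2 P /\ (g @` P)%classic = P >]]]|.
Proof.
move=> hp hk hq hn hK m htr hgen hxy hz ha2 ha0 hb2 hc2 hcb hd hbij hgK hgx hgy hgz.
have hq2 : (2 <= q)%N.
  rewrite hq -(prednK hk) expnS; apply: leq_trans (prime_gt1 hp) _.
  by apply: leq_pmulr; rewrite expn_gt0 prime_gt0.
have hcharK : p \in [pchar K].
  apply: (@card_finPcharP _ p (k * (2 * n))) => //.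
  by rewrite expnM -hq; exact: hK.
have hchar : [pchar F].-nat q.
  by rewrite hq pnatX (pnatE _ hp) (fmorph_pchar iota) hcharK.
have hm : (0 < m)%N.
  rewrite /m divn_gt0 ?addn_gt0 ?orbT // leq_add2r.
  rewrite -[X in (X <= _)%N]expn1; apply: leq_pexp2l; first by apply: leq_trans hq2.
  by case: (posnP n) => [n0|//]; rewrite n0 in hn.
apply: eq_card => -[al be]; rewrite !inE /=.
case h1: (al ^+ (q ^ 2) == al) => //=.
case h2: (be ^+ (q ^ 2) == be) => //=.
case h3: (al ^+ q + al == be ^+ q.+1) => //=.
move/eqP: h2 => hbe; move/eqP: h3 => hab.
apply: asbool_equiv_eq; split.
- exact: (dirQP ha0 hbij hgK hgx hgy).
- exact: (dirPQ hq2 hchar hm htr hgen hxy hz hbij hgK hgx hgy hab hbe).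
Qed.
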